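(* Let $-1<r<1$ and $\nu=3$ (sample size $n=4$). The posterior density of the scale-invariant slope under the Cauchy prior, $$p(\tilde\beta\mid y)=\frac{p_C(\tilde\beta)J(\tilde\beta,3,r,1)}{\int_{-\infty}^\infty p_C(x)J(x,3,r,1)\,dx},\qquad p_C(x)=\frac1\pi\frac1{1+x^2},$$ equals $$p(\tilde\beta\mid y)=K(r)\,\frac{1}{1+\tilde\beta^2}\cdot\frac{|\tilde\beta|}{\tilde\beta^2-2r\tilde\beta+1},\qquad K(r)={}_2F_1(1,1;\tfrac32;r^2)^{-1}=\frac{r\sqrt{1-r^2}}{\arcsin r}\ (r\ne0),\quad K(0)=1.$$
   Context: Functions: $p_t(t;\nu)$ Student $t$ density; $P_F(x;\nu_1,\nu_2)$ $F$ distribution function; for $\nu>1$, $-1<r<1$, $\tilde\beta>0$: $t_-(\nu,r)=-\sqrt{\nu}\,r/\sqrt{1-r^2}$, $t_+(\tilde\beta,\nu,r)=\sqrt{\nu}(\tilde\beta-r)/\sqrt{1-r^2}$, $F(t,\tilde\beta,\nu,r)=\frac{\nu-1}{\nu+1}\frac{\nu+t^2}{[t_+-t_-]^2-[t-t_-]^2}$, $I(\tilde\beta,\nu,r)=\int_{t_-}^{t_+}p_t(t;\nu)P_F(F(t,\tilde\beta,\nu,r);\nu+1,\nu-1)\,dt$, and for $\beta\ne0$, $l>0$: $J(\beta,\nu,r,l)=I(|\beta|/l,\nu,r\,\mathrm{sign}\beta)+I(l/|\beta|,\nu,r\,\mathrm{sign}\beta)$. ${}_2F_1$ is the Gauss hypergeometric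 function. The posterior of $\beta$ is $p(\tilde\beta\mid y)/l$ with $\tilde\beta=\beta/l$. *)

(* Defs.v *)
From Stdlib Require Import Reals Ratan ClassicalEpsilon.
Open Scope R_scope.

Definition integrable_on (f : R -> R) (a b : R) : Prop :=
  inhabited (Riemann_integrable f a b).

(* Value of the (proper) Riemann integral; RiemannInt is proof-irrelevant. *)
Definition RInt (f : R -> R) (a b : R) : R :=
  epsilon (inhabits 0) (fun v => exists pr : Riemann_integrable f a b, RiemannInt pr = v).

Definition is_improper_int_open (f : R -> R) (a b l : R) : Prop :=
  forall eps, 0 < eps -> exists d, 0 < d /\
    forall u v, a < u < a + d -> b - d < v < b ->
      integrable_on f u v /\ Rabs (RInt f u v - l) < eps.

Definition is_improper_int_0inf (f : R -> R) (l : R) : Prop :=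
  forall eps, 0 < eps -> exists d M, 0 < d /\
    forall u v, 0 < u < d -> M < v ->
      integrable_on f u v /\ Rabs (RInt f u v - l) < eps.

Definition is_improper_int_R (f : R -> R) (l : R) : Prop :=
  forall eps, 0 < eps -> exists M,
    forall u v, u < - M -> M < v ->
      integrable_on f u v /\ Rabs (RInt f u v - l) < eps.

Definition Gamma (x : R) : R :=
  epsilon (inhabits 0)
    (is_improper_int_0inf (fun t => Rpower t (x - 1) * exp (- t))).

Definition Beta (a b : R) : R := Gamma a * Gamma b / Gamma (a + b).

Definition p_t (t nu : R) : R :=
  Gamma ((nu + 1) / 2) / (sqrt (nu * PI) * Gamma (nu / 2))
  * Rpower (1 + t ^ 2 / nu) (- (nu + 1) / 2).

Definition F_pdf (d1 d2 s : R) : R :=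
  / Beta (d1 / 2) (d2 / 2) * Rpower (d1 / d2) (d1 / 2)
  * Rpower s (d1 / 2 - 1) * Rpower (1 + d1 * s / d2) (- (d1 + d2) / 2).

Definition P_F (x d1 d2 : R) : R :=
  if Rle_dec x 0 then 0
  else epsilon (inhabits 0) (is_improper_int_open (F_pdf d1 d2) 0 x).

Definition p_C (x : R) : R := / PI * / (1 + x ^ 2).

Definition t_minus (nu r : R) : R := - sqrt nu * r / sqrt (1 - r ^ 2).
Definition t_plus (bt nu r : R) : R := sqrt nu * (bt - r) / sqrt (1 - r ^ 2).

Definition Fstat (t bt nu r : R) : R :=
  (nu - 1) / (nu + 1) * (nu + t ^ 2)
  / ((t_plus bt nu r - t_minus nu r) ^ 2 - (t - t_minus nu r) ^ 2).

Definition I_fun (bt nu r : R) : R :=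
  RInt (fun t => p_t t nu * P_F (Fstat t bt nu r) (nu + 1) (nu - 1))
       (t_minus nu r) (t_plus bt nu r).

Definition sgn (x : R) : R :=
  if Rlt_dec 0 x then 1 else if Rlt_dec x 0 then -1 else 0.

Definition J_fun (b nu r l : R) : R :=
  I_fun (Rabs b / l) nu (r * sgn b) + I_fun (l / Rabs b) nu (r * sgn b).

Fixpoint poch (a : R) (n : nat) : R :=
  match n with O => 1 | S k => poch a k * (a + INR k) end.

Definition hyp2F1_term (a b c z : R) (n : nat) : R :=
  poch a n * poch b n / poch c n * z ^ n / INR (Factorial.fact n).

(* Main.v *)
Require Import Defs.
From Stdlib Require Import Reals Ratan ClassicalEpsilon.
From Stdlib Require Import Lra Lia.
From Coquelicot Require Import Coquelicot.
Open Scope R_scope.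

Lemma bridge f a b l : is_RInt f a b l -> integrable_on f a b /\ Defs.RInt f a b = l.
Proof.
  intro H.
  assert (pr : Riemann_integrable f a b) by (apply ex_RInt_Reals_0; exists l; exact H).
  split; [exact (inhabits pr)|].
  unfold Defs.RInt.
  destruct (epsilon_spec (inhabits 0) (fun v => exists pr : Riemann_integrable f a b, RiemannInt pr = v)) as [pr' Hp].
  { exists (RiemannInt pr); exists pr; reflexivity. }
  rewrite <- Hp, <- RInt_Reals. now apply is_RInt_unique.
Qed.

Lemma is_RInt_derive_R (F f : R -> R) a b :
  (forall x, Rmin a b <= x <= Rmax a b -> is_derive F x (f x)) ->
  (forall x, Rmin a b <= x <= Rmax a b -> continuous f x) ->
  is_RInt f a b (F b - F a).
Proof. intros; exact (is_RInt_derive F f a b H H0). Qed.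

Lemma cont_ed f x0 : continuity_pt f x0 -> forall eps, 0 < eps ->
  exists d, 0 < d /\ forall x, Rabs (x - x0) < d -> Rabs (f x - f x0) < eps.
Proof.
  intros H eps He. destruct (H eps He) as [d [Hd Hx]].
  exists d; split; auto. intros x Hxx.
  destruct (Req_dec x x0) as [->|Hn].
  - rewrite Rminus_diag, Rabs_R0; auto.
  - apply (Hx x). split; [split; [exact I| auto]|]. exact Hxx.
Qed.

Lemma improper_open_of_antideriv f G a b : a < b -> continuity_pt G a -> continuity_pt G b ->
  (forall u v, a < u -> u < v -> v < b -> is_RInt f u v (G v - G u)) ->
  is_improper_int_open f a b (G b - G a).
Proof.
  intros Hab Ca Cb HI eps He.
  destruct (cont_ed G a Ca (eps/2)) as [d1 [Hd1 H1]]; [lra|].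
  destruct (cont_ed G b Cb (eps/2)) as [d2 [Hd2 H2]]; [lra|].
  exists (Rmin d1 (Rmin d2 ((b-a)/2))). split.
  { repeat apply Rmin_glb_lt; lra. }
  intros u v Hu Hv.
  assert (m1 := Rmin_l d1 (Rmin d2 ((b-a)/2))).
  assert (m2 := Rmin_l d2 ((b-a)/2)). assert (m3 := Rmin_r d2 ((b-a)/2)).
  assert (m4 := Rmin_r d1 (Rmin d2 ((b-a)/2))).
  destruct (bridge f u v (G v - G u)) as [Hi Hr]. { apply HI; lra. }
  split; auto. rewrite Hr.
  assert (A1 : Rabs (G u - G a) < eps/2) by (apply H1; rewrite Rabs_right; lra).
  assert (A2 : Rabs (G v - G b) < eps/2) by (apply H2; rewrite Rabs_left; lra).
  apply Rabs_def2 in A1; apply Rabs_def2 in A2. apply Rabs_def1; lra.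
Qed.

Lemma improper_open_unique f a b l1 l2 : a < b ->
  is_improper_int_open f a b l1 -> is_improper_int_open f a b l2 -> l1 = l2.
Proof.
  intros Hab H1 H2. destruct (Req_dec l1 l2) as [|Hn]; auto. exfalso.
  assert (He : 0 < Rabs (l1 - l2) / 2) by (assert (0 < Rabs (l1 - l2)) by (apply Rabs_pos_lt; lra); lra).
  destruct (H1 _ He) as [d1 [Hd1 P1]]. destruct (H2 _ He) as [d2 [Hd2 P2]].
  set (m := Rmin d1 (Rmin d2 (b - a))).
  assert (m1 := Rmin_l d1 (Rmin d2 (b-a))).
  assert (m2 := Rmin_l d2 (b-a)). assert (m3 := Rmin_r d2 (b-a)).
  assert (m4 := Rmin_r d1 (Rmin d2 (b-a))).
  assert (0 < m) by (unfold m; repeat apply Rmin_glb_lt; lra).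
  destruct (P1 (a + m/2) (b - m/2)) as [_ Q1]; [unfold m in *; lra|unfold m in *; lra|].
  destruct (P2 (a + m/2) (b - m/2)) as [_ Q2]; [unfold m in *; lra|unfold m in *; lra|].
  assert (Rabs (l1 - l2) <= Rabs (Defs.RInt f (a + m / 2) (b - m / 2) - l1) + Rabs (Defs.RInt f (a + m / 2) (b - m / 2) - l2)).
  { replace (l1 - l2) with (-(Defs.RInt f (a + m / 2) (b - m / 2) - l1) + (Defs.RInt f (a + m / 2) (b - m / 2) - l2)) by ring.
    eapply Rle_trans; [apply Rabs_triang|]. rewrite Rabs_Ropp; lra. }
  lra.
Qed.

Lemma improper_0inf_unique f l1 l2 :
  is_improper_int_0inf f l1 -> is_improper_int_0inf f l2 -> l1 = l2.
Proof.
  intros H1 H2. destruct (Req_dec l1 l2) as [|Hn]; auto. exfalso.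
  assert (He : 0 < Rabs (l1 - l2) / 2) by (assert (0 < Rabs (l1 - l2)) by (apply Rabs_pos_lt; lra); lra).
  destruct (H1 _ He) as [d1 [M1 [Hd1 P1]]]. destruct (H2 _ He) as [d2 [M2 [Hd2 P2]]].
  set (m := Rmin d1 d2). set (V := Rmax M1 M2 + 1).
  assert (m1 := Rmin_l d1 d2). assert (m2 := Rmin_r d1 d2).
  assert (v1 := Rmax_l M1 M2). assert (v2 := Rmax_r M1 M2).
  assert (0 < m) by (unfold m; apply Rmin_glb_lt; lra).
  destruct (P1 (m/2) V) as [_ Q1]; [unfold m, V in *; lra|unfold m, V in *; lra|].
  destruct (P2 (m/2) V) as [_ Q2]; [unfold m, V in *; lra|unfold m, V in *; lra|].
  assert (Rabs (l1 - l2) <= Rabs (Defs.RInt f (m/2) V - l1) + Rabs (Defs.RInt f (m/2) V - l2)).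
  { replace (l1 - l2) with (-(Defs.RInt f (m/2) V - l1) + (Defs.RInt f (m/2) V - l2)) by ring.
    eapply Rle_trans; [apply Rabs_triang|]. rewrite Rabs_Ropp; lra. }
  lra.
Qed.

Lemma improper_R_of_antideriv (f k Phi : R -> R) (L : R) :
  (forall x, is_derive Phi x (k x)) -> (forall x, continuous k x) ->
  (forall x, 0 <= x -> f x = k x) -> (forall x, x <= 0 -> f x = - k x) ->
  (forall eps, 0 < eps -> exists M, forall u v, u < -M -> M < v -> Rabs (Phi u + Phi v - L) < eps) ->
  is_improper_int_R f (L - 2 * Phi 0).
Proof.
  intros Hd Hc Hp Hn Hl eps He. destruct (Hl eps He) as [M HM].
  exists (Rmax M 0). intros u v Hu Hv.
  assert (r1 := Rmax_l M 0). assert (r2 := Rmax_r M 0).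
  assert (I1 : is_RInt f 0 v (Phi v - Phi 0)).
  { apply is_RInt_ext with k.
    { intros x Hx. rewrite Rmin_left in Hx by lra. symmetry; apply Hp; lra. }
    apply is_RInt_derive_R; auto. }
  assert (I2 : is_RInt f u 0 ((fun x => - Phi x) 0 - (fun x => - Phi x) u)).
  { apply is_RInt_ext with (fun x => - k x).
    { intros x Hx. rewrite Rmax_right in Hx by lra. symmetry; apply Hn; lra. }
    apply (is_RInt_derive_R (fun x => - Phi x) (fun x => - k x)).
    - intros; apply (is_derive_opp Phi); auto.
    - intros. apply (continuous_opp k); auto. }
  assert (I3 := is_RInt_Chasles f u 0 v _ _ I2 I1).
  destruct (bridge _ _ _ _ I3) as [Hi Hr]. split; auto. rewrite Hr.
  simpl. unfold plus; simpl.
  replace (- Phi 0 - - Phi u + (Phi v - Phi 0) - (L - 2 * Phi 0)) with (Phi u + Phi v - L) by ring.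
  apply HM; lra.
Qed.

Lemma ex_RInt_cont_R (f : R -> R) a b :
  (forall z, Rmin a b <= z <= Rmax a b -> continuous f z) -> ex_RInt f a b.
Proof. intro H. exact (ex_RInt_continuous f a b H). Qed.

Lemma cont_of_derive (f : R -> R) x : ex_derive f x -> continuous f x.
Proof. intro H. exact (ex_derive_continuous f x H). Qed.

Lemma exp_le x y : x <= y -> exp x <= exp y.
Proof. intros [H|H]; [left; apply exp_increasing; auto| subst; right; auto]. Qed.

Lemma is_RInt_ext_R (f g : R -> R) a b (l : R) :
  (forall x, Rmin a b < x < Rmax a b -> f x = g x) -> is_RInt f a b l -> is_RInt g a b l.
Proof. intros H I. exact (is_RInt_ext f g a b l H I). Qed.


Definition gfa (a : R) := fun t => Rpower t (a - 1) * exp (- t).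

Lemma gf_cont (a : R) (Ha : 1 <= a <= 3) t : 0 < t -> continuous (gfa a) t.
Proof. intro Ht. apply (ex_derive_continuous (gfa a) t). unfold gfa, Rpower. auto_derive. lra. Qed.

Lemma gf_ex (a : R) (Ha : 1 <= a <= 3) x y : 0 < x -> 0 < y -> ex_RInt (gfa a) x y.
Proof.
  intros. apply ex_RInt_cont_R. intros z Hz. apply (gf_cont a Ha).
  assert (Rmin x y > 0) by (apply Rmin_glb_lt; lra). lra.
Qed.

Lemma gf_pos (a : R) (Ha : 1 <= a <= 3) t : 0 < t -> 0 < (gfa a) t.
Proof. intro. unfold gfa, Rpower. apply Rmult_lt_0_compat; apply exp_pos. Qed.

Lemma gf_le1 (a : R) (Ha : 1 <= a <= 3) t : 0 < t -> t <= 1 -> (gfa a) t <= 1.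
Proof.
  intros. unfold gfa, Rpower. rewrite <- exp_plus. apply Rle_trans with (exp 0); [|rewrite exp_0; lra]. apply exp_le.
  assert (ln t <= 0) by (rewrite <- ln_1; apply ln_le; lra).
  assert (0 <= (a-1) * (- ln t)) by (apply Rmult_le_pos; lra). lra.
Qed.

Lemma gf_le_big (a : R) (Ha : 1 <= a <= 3) t : 1 <= t -> (gfa a) t <= 16 * exp (- t / 2).
Proof.
  intros. unfold gfa.
  assert (P1 : Rpower t (a - 1) <= t ^ 2).
  { rewrite <- (Rpower_pow 2 t) by lra. apply Rle_Rpower; [lra|]. simpl; lra. }
  assert (E1 : t / 4 < exp (t / 4)) by (assert (HH := exp_ineq1 (t/4)); assert (HH1 : t/4 <> 0) by lra; specialize (HH HH1); lra).
  assert (E2 : exp (t/2) = exp (t/4) * exp (t/4)) by (rewrite <- exp_plus; f_equal; lra).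
  assert (E3 : exp (-t) = exp (-t/2) * exp (-t/2)) by (rewrite <- exp_plus; f_equal; lra).
  assert (E4 : exp (-t/2) * exp (t/2) = 1) by (rewrite <- exp_plus; replace (-t/2 + t/2) with 0 by lra; apply exp_0).
  assert (0 < exp (-t/2)) by apply exp_pos.
  assert (0 <= Rpower t (a - 1)) by (unfold Rpower; left; apply exp_pos).
  rewrite E3.
  assert (t ^ 2 <= 16 * exp (t/2)) by (rewrite E2; nra).
  assert (t^2 * exp(-t/2) <= 16) by nra.
  nra.
Qed.

Definition Aset (a : R) y := exists u, 0 < u <= 1 /\ y = RInt (gfa a) u 1.
Definition Bset (a : R) y := exists v, 1 <= v /\ y = RInt (gfa a) 1 v.

Lemma Abound (a : R) (Ha : 1 <= a <= 3) u : 0 < u <= 1 -> 0 <= RInt (gfa a) u 1 <= 1.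
Proof.
  intros. split.
  - apply RInt_ge_0; try lra. apply (gf_ex a Ha); lra. intros; left; apply (gf_pos a Ha); lra.
  - apply Rle_trans with (RInt (fun _ => 1) u 1).
    + apply RInt_le; try lra. apply (gf_ex a Ha); lra. apply ex_RInt_const.
      intros; apply (gf_le1 a Ha); lra.
    + rewrite RInt_const. unfold scal; simpl; unfold mult; simpl. nra.
Qed.

Lemma Bbound (a : R) (Ha : 1 <= a <= 3) v : 1 <= v -> 0 <= RInt (gfa a) 1 v <= 32.
Proof.
  intros. split.
  - apply RInt_ge_0; try lra. apply (gf_ex a Ha); lra. intros; left; apply (gf_pos a Ha); lra.
  - assert (I : is_RInt (fun t => 16 * exp (- t / 2)) 1 v
                 ((fun t => -32 * exp (- t / 2)) v - (fun t => -32 * exp (- t/2)) 1)).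
    { apply (is_RInt_derive_R (fun t => -32 * exp (- t/2)) (fun t => 16 * exp (- t / 2))).
      - intros. auto_derive; auto. lra.
      - intros. apply (ex_derive_continuous (fun t => 16 * exp (- t / 2))). auto_derive; auto. }
    apply Rle_trans with (RInt (fun t => 16 * exp (- t / 2)) 1 v).
    + apply RInt_le; try lra. apply (gf_ex a Ha); lra. eexists; exact I.
      intros; apply (gf_le_big a Ha); lra.
    + rewrite (is_RInt_unique _ _ _ _ I). simpl.
      assert (0 < exp (-v/2)) by apply exp_pos.
      assert (exp (- (1) / 2) <= exp 0) by (apply exp_le; lra). rewrite exp_0 in *. lra.
Qed.

Lemma Gamma_exists (a : R) (Ha : 1 <= a <= 3) : exists L, 0 < L /\ is_improper_int_0inf (gfa a) L.
Proof.
  destruct (completeness (Aset a)) as [LA HA].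
  { exists 1. intros y [u [Hu ->]]. apply (Abound a Ha); auto. }
  { exists (RInt (gfa a) 1 1). exists 1. split; auto; lra. }
  destruct (completeness (Bset a)) as [LB HB].
  { exists 32. intros y [v [Hv ->]]. apply (Bbound a Ha); auto. }
  { exists (RInt (gfa a) 1 1). exists 1. split; auto; lra. }
  assert (LA0 : 0 <= LA).
  { apply Rle_trans with (RInt (gfa a) 1 1). apply (Abound a Ha); lra. apply HA. exists 1; split; auto; lra. }
  assert (LB0 : exp (-2) <= LB).
  { apply Rle_trans with (RInt (gfa a) 1 2); [| apply HB; exists 2; split; auto; lra].
    apply Rle_trans with (RInt (fun _ => exp (-2)) 1 2).
    - rewrite RInt_const. unfold scal; simpl; unfold mult; simpl. lra.
    - apply RInt_le; try lra. apply ex_RInt_const. apply (gf_ex a Ha); lra.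
      intros x Hx. unfold gfa.
      assert (1 <= Rpower x (a-1)).
      { apply Rle_trans with (Rpower x 0); [rewrite Rpower_O; lra | apply Rle_Rpower; lra]. }
      assert (exp (-2) <= exp (-x)) by (apply exp_le; lra).
      assert (0 < exp (-2)) by apply exp_pos. nra. }
  assert (0 < exp (-2)) by apply exp_pos.
  exists (LA + LB). split; [lra|].
  intros eps He.
  assert (XA : exists u0, 0 < u0 <= 1 /\ LA - eps/2 < RInt (gfa a) u0 1).
  { apply Classical_Prop.NNPP; intro N.
    assert (is_upper_bound (Aset a) (LA - eps/2)).
    { intros y [u [Hu ->]]. apply Rnot_lt_le. intro. apply N. exists u; auto. }
    destruct HA as [_ HA2]. specialize (HA2 _ H0). lra. }
  assert (XB : exists v0, 1 <= v0 /\ LB - eps/2 < RInt (gfa a) 1 v0).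
  { apply Classical_Prop.NNPP; intro N.
    assert (is_upper_bound (Bset a) (LB - eps/2)).
    { intros y [v [Hv ->]]. apply Rnot_lt_le. intro. apply N. exists v; auto. }
    destruct HB as [_ HB2]. specialize (HB2 _ H0). lra. }
  destruct XA as [u0 [Hu0 Au0]]. destruct XB as [v0 [Hv0 Bv0]].
  exists u0, v0. split; [lra|]. intros u v Hu Hv.
  assert (Is : is_RInt (gfa a) u v (RInt (gfa a) u v)) by (apply (RInt_correct (gfa a) u v); apply (gf_ex a Ha); lra).
  destruct (bridge _ _ _ _ Is) as [Hi Hr]. split; auto. rewrite Hr.
  assert (C1 := RInt_Chasles (gfa a) u 1 v (gf_ex a Ha u 1 ltac:(lra) ltac:(lra)) (gf_ex a Ha 1 v ltac:(lra) ltac:(lra))).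
  assert (C2 := RInt_Chasles (gfa a) u u0 1 (gf_ex a Ha u u0 ltac:(lra) ltac:(lra)) (gf_ex a Ha u0 1 ltac:(lra) ltac:(lra))).
  assert (C3 := RInt_Chasles (gfa a) 1 v0 v (gf_ex a Ha 1 v0 ltac:(lra) ltac:(lra)) (gf_ex a Ha v0 v ltac:(lra) ltac:(lra))).
  unfold plus in C1, C2, C3; simpl in C1, C2, C3.
  assert (P2 : 0 <= RInt (gfa a) u u0).
  { apply RInt_ge_0; try lra. apply (gf_ex a Ha); lra. intros; left; apply (gf_pos a Ha); lra. }
  assert (P3 : 0 <= RInt (gfa a) v0 v).
  { apply RInt_ge_0; try lra. apply (gf_ex a Ha); lra. intros; left; apply (gf_pos a Ha); lra. }
  assert (U1 : RInt (gfa a) u 1 <= LA) by (apply HA; exists u; split; auto; lra).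
  assert (U2 : RInt (gfa a) 1 v <= LB) by (apply HB; exists v; split; auto; lra).
  apply Rabs_def1; lra.
Qed.

Lemma Gamma_pos a : 1 <= a <= 3 -> 0 < Gamma a.
Proof.
  intro Ha. destruct (Gamma_exists a Ha) as [L [HL HI]].
  unfold Gamma.
  assert (E := epsilon_spec (inhabits 0) (is_improper_int_0inf (fun t => Rpower t (a - 1) * exp (- t)))
     (ex_intro _ L HI)).
  rewrite (improper_0inf_unique _ _ _ E HI). exact HL.
Qed.


Definition kF := 2 / Beta ((3+1)/2) ((3-1)/2).
Definition GF s := kF * (s^2 / (1 + 2*s)^2).

Lemma F_pdf_val s : 0 < s -> F_pdf (3+1) (3-1) s = kF * (2 * s / (1 + 2*s)^3).
Proof.
  intro Hs. unfold F_pdf, kF.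
  replace (Rpower ((3+1)/(3-1)) ((3+1)/2)) with 4.
  2:{ replace ((3+1)/(3-1)) with 2 by field. replace ((3+1)/2) with (INR 2) by (simpl; field).
      rewrite Rpower_pow by lra. simpl; ring. }
  replace (Rpower s ((3+1)/2 - 1)) with s by (replace ((3+1)/2-1) with 1 by field; rewrite Rpower_1; auto).
  replace (- (3 + 1 + (3 - 1)) / 2) with (- INR 3) by (simpl; field).
  replace (1 + (3+1)*s/(3-1)) with (1 + 2*s) by field.
  rewrite Rpower_Ropp, Rpower_pow by lra. unfold Rdiv. ring.
Qed.

Lemma P_F_val x : 0 < x -> P_F x (3+1) (3-1) = GF x.
Proof.
  intro Hx. unfold P_F. destruct (Rle_dec x 0) as [|_]; [lra|].
  assert (Hc : forall s, -1/2 < s -> continuity_pt GF s).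
  { intros s Hs. apply continuity_pt_filterlim. apply (cont_of_derive GF s).
    unfold GF. auto_derive. nra. }
  assert (HI : is_improper_int_open (F_pdf (3+1) (3-1)) 0 x (GF x - GF 0)).
  { apply improper_open_of_antideriv; auto; try (apply Hc; lra).
    intros u v Hu Huv Hv.
    apply is_RInt_ext with (fun s => kF * (2 * s / (1 + 2*s)^3)).
    { intros s Hs. rewrite Rmin_left in Hs by lra. symmetry; apply F_pdf_val; lra. }
    apply is_RInt_derive_R.
    - intros s Hs. rewrite Rmin_left in Hs by lra. unfold GF. auto_derive. nra. field. nra.
    - intros s Hs. rewrite Rmin_left in Hs by lra. apply cont_of_derive. auto_derive. nra. }
  assert (E := epsilon_spec (inhabits 0) (is_improper_int_open (F_pdf (3+1) (3-1)) 0 x) (ex_intro _ _ HI)).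
  rewrite (improper_open_unique _ _ _ _ _ Hx E HI). unfold GF. unfold Rdiv. rewrite !pow_i by lia. rewrite Rmult_0_l, Rmult_0_r. ring.
Qed.


Lemma lin_pos (al be a b t : R) : 0 < al + be * a -> 0 < al + be * b ->
  Rmin a b <= t <= Rmax a b -> 0 < al + be * t.
Proof.
  intros Ha Hb Ht. destruct (Rle_dec a b) as [h|h].
  - rewrite Rmin_left, Rmax_right in Ht by lra.
    destruct (Req_dec a b) as [->|hn]. { assert (t = b) by lra. subst; auto. }
    assert (0 < (b - a) * (al + be * t)).
    { replace ((b - a) * (al + be * t)) with ((b - t) * (al + be * a) + (t - a) * (al + be * b)) by ring.
      destruct (Req_dec t b) as [->|]. { nra. } nra. }
    nra.
  - rewrite Rmin_right, Rmax_left in Ht by lra.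
    assert (0 < (a - b) * (al + be * t)).
    { replace ((a - b) * (al + be * t)) with ((a - t) * (al + be * b) + (t - b) * (al + be * a)) by ring.
      destruct (Req_dec t a) as [->|]. { nra. } nra. }
    nra.
Qed.

Lemma int_lin (C0 al be a b : R) : 0 < al + be * a -> 0 < al + be * b ->
  is_RInt (fun t => C0 / (al + be * t)^2) a b (C0 * (b - a) / ((al + be * a) * (al + be * b))).
Proof.
  intros Ha Hb.
  assert (E : C0 * (b - a) / ((al + be * a) * (al + be * b)) =
    (fun t => C0 * (t - a) / ((al + be * a) * (al + be * t))) b - (fun t => C0 * (t - a) / ((al + be * a) * (al + be * t))) a).
  { simpl. field. lra. }
  rewrite E. apply (is_RInt_derive_R (fun t => C0 * (t - a) / ((al + be * a) * (al + be * t))) (fun t => C0 / (al + be * t)^2)).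
  - intros t Ht. assert (P := lin_pos al be a b t Ha Hb Ht). auto_derive.
    + nra.
    + field. lra.
  - intros t Ht. assert (P := lin_pos al be a b t Ha Hb Ht). apply cont_of_derive. auto_derive. nra.
Qed.

Definition cT := Gamma ((3+1)/2) / (sqrt (3 * PI) * Gamma (3/2)).
Definition C0 := 9 * cT * kF / 4.
Definition mm (rho : R) := sqrt 3 / sqrt (1 - rho^2).

Lemma p_t_val t : p_t t 3 = cT / (1 + t^2/3)^2.
Proof.
  unfold p_t, cT. replace (- (3+1)/2) with (- INR 2) by (simpl; field).
  rewrite Rpower_Ropp, Rpower_pow. unfold Rdiv. ring.
  assert (0 <= t^2) by (apply pow2_ge_0). lra.
Qed.

Lemma I_val bt rho : 0 <= bt -> -1 < rho < 1 ->
  I_fun bt 3 rho = C0 / (mm rho)^3 * (bt / ((bt^2 + 1) * (bt^2 - 2 * rho * bt + 1))).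
Proof.
  intros Hbt Hr.
  assert (Hq : 0 < sqrt (1 - rho^2)) by (apply sqrt_lt_R0; nra).
  assert (H3 : 0 < sqrt 3) by (apply sqrt_lt_R0; lra).
  assert (Hm : 0 < mm rho) by (unfold mm; apply Rdiv_lt_0_compat; auto).
  assert (Hm2 : (mm rho)^2 * (1 - rho^2) = 3).
  { unfold mm. unfold Rdiv. rewrite Rpow_mult_distr, pow_inv.
    rewrite !pow2_sqrt by nra. field. nra. }
  set (m := mm rho) in *.
  assert (Etm : t_minus 3 rho = - m * rho) by (unfold t_minus, m, mm; field; lra).
  assert (Etp : t_plus bt 3 rho = m * (bt - rho)) by (unfold t_plus, m, mm; field; lra).
  set (al := m^2 * (bt^2 + 1 - 2 * rho^2)). set (be := - 2 * m * rho).
  assert (Pa : 0 < al + be * t_minus 3 rho).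
  { rewrite Etm. unfold al, be. replace (m ^ 2 * (bt ^ 2 + 1 - 2 * rho ^ 2) + -2 * m * rho * (- m * rho))
      with (m^2 * (bt^2 + 1)) by ring. apply Rmult_lt_0_compat; nra. }
  assert (Pb : 0 < al + be * t_plus bt 3 rho).
  { rewrite Etp. unfold al, be. replace (m ^ 2 * (bt ^ 2 + 1 - 2 * rho ^ 2) + -2 * m * rho * (m * (bt - rho)))
      with (m^2 * ((bt - rho)^2 + (1 - rho^2))) by ring. apply Rmult_lt_0_compat; [nra|]. assert (0 <= (bt-rho)^2) by apply pow2_ge_0. nra. }
  assert (I := int_lin C0 al be _ _ Pa Pb).
  assert (I2 : is_RInt (fun t => p_t t 3 * P_F (Fstat t bt 3 rho) (3 + 1) (3 - 1))
                 (t_minus 3 rho) (t_plus bt 3 rho)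
                 (C0 * (t_plus bt 3 rho - t_minus 3 rho) /
                   ((al + be * t_minus 3 rho) * (al + be * t_plus bt 3 rho)))).
  { apply is_RInt_ext_R with (2 := I).
    intros t Ht. rewrite Etm, Etp in Ht.
    assert (Hle : - m * rho <= m * (bt - rho)) by nra.
    rewrite Rmin_left, Rmax_right in Ht by lra.
    set (D := (t_plus bt 3 rho - t_minus 3 rho) ^ 2 - (t - t_minus 3 rho) ^ 2).
    assert (HD : 0 < D).
    { unfold D. rewrite Etm, Etp.
      replace ((m * (bt - rho) - - m * rho) ^ 2 - (t - - m * rho) ^ 2) with
        ((m * (bt - rho) - t) * (m * (bt - rho) + t + 2 * m * rho)) by ring.
      apply Rmult_lt_0_compat; lra. }
    assert (HL : D + 3 + t^2 = al + be * t).
    { unfold D, al, be. rewrite Etm, Etp. rewrite <- Hm2 at 1. ring. }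
    assert (HF : Fstat t bt 3 rho = (3 - 1) / (3 + 1) * (3 + t ^ 2) / D) by reflexivity.
    assert (Ht2 : 0 <= t^2) by apply pow2_ge_0.
    rewrite HF, P_F_val, p_t_val.
    2:{ apply Rdiv_lt_0_compat; auto. apply Rmult_lt_0_compat; lra. }
    unfold GF, C0. rewrite <- HL. clearbody D. field. repeat split; lra. }
  destruct (bridge _ _ _ _ I2) as [_ R2]. unfold I_fun. rewrite R2.
  rewrite Etm, Etp in *. unfold al, be in *. assert (0 <= (bt-rho)^2) by apply pow2_ge_0. field. repeat split; nra.
Qed.


Definition Kc (r : R) := C0 / (mm r)^3.

Lemma mm_sq r1 r2 : r1^2 = r2^2 -> mm r1 = mm r2.
Proof. intro H. unfold mm. rewrite H. reflexivity. Qed.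

Lemma J_val r b : -1 < r < 1 -> J_fun b 3 r 1 = Kc r * (Rabs b / (b^2 - 2 * r * b + 1)).
Proof.
  intro Hr. unfold J_fun.
  destruct (Req_dec b 0) as [->|Hb].
  - rewrite Rabs_R0. unfold Rdiv at 1 2. rewrite Rmult_0_l, Rinv_0, Rmult_0_r.
    unfold sgn. destruct (Rlt_dec 0 0); [lra|]. destruct (Rlt_dec 0 0); [lra|].
    rewrite Rmult_0_r, I_val by lra. unfold Rdiv; ring.
  - assert (Hs : sgn b * sgn b = 1 /\ sgn b * Rabs b = b).
    { unfold sgn. destruct (Rlt_dec 0 b).
      - rewrite Rabs_right by lra. split; ring.
      - destruct (Rlt_dec b 0); [|lra]. rewrite Rabs_left by lra. split; ring. }
    destruct Hs as [Hs1 Hs2].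
    set (rho := r * sgn b).
    assert (Hrho2 : rho^2 = r^2) by (unfold rho; replace ((r * sgn b)^2) with (r^2 * (sgn b * sgn b)) by ring; rewrite Hs1; ring).
    assert (Hrho : -1 < rho < 1) by (split; nra).
    assert (Hx : 0 < Rabs b) by (apply Rabs_pos_lt; auto).
    rewrite !I_val by (auto; try (unfold Rdiv; apply Rmult_le_pos; [lra|left; apply Rinv_0_lt_compat; lra]); lra).
    unfold Kc. rewrite (mm_sq rho r Hrho2).
    assert (Hrb : rho * Rabs b = r * b) by (unfold rho; rewrite Rmult_assoc, Hs2; ring).
    assert (Hb2 : Rabs b ^ 2 = b ^ 2) by (apply pow2_abs).
    assert (HQ : 0 < b^2 - 2 * r * b + 1).
    { assert (0 <= (b - r)^2) by apply pow2_ge_0. nra. }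
    assert (Hm : 0 < mm r) by (unfold mm; apply Rdiv_lt_0_compat; apply sqrt_lt_R0; nra).
    set (x := Rabs b) in *.
    assert (E1 : x^2 - 2 * rho * x + 1 = b^2 - 2 * r * b + 1) by (rewrite Hb2; lra).
    replace ((x/1)^2 - 2 * rho * (x/1) + 1) with (b^2 - 2 * r * b + 1) by (unfold Rdiv; rewrite Rinv_1, !Rmult_1_r; lra).
    replace ((1/x)^2 - 2 * rho * (1/x) + 1) with ((b^2 - 2 * r * b + 1) / x^2).
    2:{ rewrite <- E1. field. lra. }
    field. repeat split; try lra. rewrite Hb2. nra.
Qed.



Lemma atan_big eps : 0 < eps -> exists Y, 0 < Y /\ forall y, Y < y -> PI/2 - eps < atan y.
Proof.
  intro He.
  assert (C : continuity_pt atan 0).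
  { apply continuity_pt_filterlim. apply cont_of_derive. eexists; apply is_derive_atan. }
  destruct (cont_ed _ _ C eps He) as [d [Hd Hx]].
  exists (2 / d). split; [apply Rdiv_lt_0_compat; lra|].
  intros y Hy. assert (Hy0 : 0 < y) by (assert (0 < 2/d) by (apply Rdiv_lt_0_compat; lra); lra).
  assert (A := atan_inv y Hy0).
  assert (Hs : / y < d).
  { apply Rmult_lt_reg_l with y; auto. rewrite Rinv_r by lra.
    assert (2 / d * d = 2) by (field; lra). nra. }
  assert (Hp : 0 < / y) by (apply Rinv_0_lt_compat; lra).
  specialize (Hx (/ y)). rewrite atan_0, !Rminus_0_r, Rabs_right in Hx by lra.
  specialize (Hx Hs). apply Rabs_def2 in Hx. lra.
Qed.

Lemma atan_lims eps : 0 < eps -> exists Y, 0 < Y /\ forall y, Y < y ->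
  Rabs (atan y - PI/2) < eps /\ Rabs (atan (- y) + PI/2) < eps.
Proof.
  intro He. destruct (atan_big eps He) as [Y [HY H]]. exists Y; split; auto.
  intros y Hy. specialize (H y Hy). assert (B := atan_bound y). rewrite atan_opp.
  split; apply Rabs_def1; lra.
Qed.

Lemma fval r x : -1 < r < 1 -> p_C x * J_fun x 3 r 1 =
   / PI * Kc r * (Rabs x / ((1 + x^2) * (x^2 - 2 * r * x + 1))).
Proof.
  intro Hr. rewrite J_val by auto. unfold p_C.
  assert (0 <= (x - r)^2) by apply pow2_ge_0.
  assert (0 < x^2 - 2 * r * x + 1) by nra.
  assert (0 <= x^2) by apply pow2_ge_0.
  field. repeat split; try lra. apply PI_neq0.
Qed.

Lemma Zint_nz r : -1 < r < 1 -> r <> 0 ->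
  is_improper_int_R (fun x => p_C x * J_fun x 3 r 1)
    (/ PI * Kc r * (atan (r / sqrt (1 - r^2)) / (r * sqrt (1 - r^2)))).
Proof.
  intros Hr Hr0.
  set (q := sqrt (1 - r^2)).
  assert (Hq : 0 < q) by (apply sqrt_lt_R0; nra).
  assert (Hq2 : q^2 = 1 - r^2) by (unfold q; apply pow2_sqrt; nra).
  set (cst := / PI * Kc r). set (c' := cst / (2 * r)).
  set (k := fun x => c' * (1 / ((x - r)^2 + q^2) - 1 / (1 + x^2))).
  set (Phi := fun x => c' * (/ q * atan ((x - r) / q) - atan x)).
  assert (Hpos : forall x, 0 < (x - r)^2 + q^2) by (intro x; assert (0 <= (x-r)^2) by apply pow2_ge_0; nra).
  assert (Hpos2 : forall x, 0 < 1 + x^2) by (intro x; assert (0 <= x^2) by apply pow2_ge_0; nra).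
  assert (EZ : 0 - 2 * Phi 0 = / PI * Kc r * (atan (r / q) / (r * q))).
  { unfold Phi, c', cst. rewrite atan_0. replace ((0 - r)/q) with (- (r/q)) by (field; lra).
    rewrite atan_opp. field. repeat split; try lra; apply PI_neq0. }
  fold cst in EZ. rewrite <- EZ.
  apply (improper_R_of_antideriv _ k Phi).
  - intro x. unfold Phi, k. auto_derive.
    + repeat split; auto; specialize (Hpos2 x); lra.
    + specialize (Hpos x); specialize (Hpos2 x). field. repeat split; lra.
  - intro x. apply cont_of_derive. unfold k. auto_derive. specialize (Hpos x); specialize (Hpos2 x). repeat split; lra.
  - intros x Hx. rewrite fval by auto. rewrite Rabs_right by lra. unfold k, c', cst.
    specialize (Hpos x); specialize (Hpos2 x).
    replace ((x - r)^2 + q^2) with (x^2 - 2 * r * x + 1) in * by (rewrite Hq2; ring).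
    field. repeat split; try lra; apply PI_neq0.
  - intros x Hx. rewrite fval by auto. rewrite Rabs_left1 by lra. unfold k, c', cst.
    specialize (Hpos x); specialize (Hpos2 x).
    replace ((x - r)^2 + q^2) with (x^2 - 2 * r * x + 1) in * by (rewrite Hq2; ring).
    field. repeat split; try lra; apply PI_neq0.
  - intros eps He.
    set (iq := / q). assert (Hiq : 0 < iq) by (apply Rinv_0_lt_compat; auto).
    set (K := Rabs c' * (iq + 1)).
    assert (HK : 0 <= K) by (unfold K; apply Rmult_le_pos; [apply Rabs_pos|lra]).
    set (dl := eps / (2 * K + 1)).
    assert (Hdl : 0 < dl) by (apply Rdiv_lt_0_compat; lra).
    destruct (atan_lims dl Hdl) as [Y [HY HA]].
    exists (Y + Rabs r + q * Y + 1). intros u v Hu Hv.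
    assert (r1 := Rle_abs r). assert (r2 := Rle_abs (-r)). rewrite Rabs_Ropp in r2.
    assert (0 <= q * Y) by nra.
    assert (Hv1 : Y < (v - r) / q).
    { apply Rmult_lt_reg_r with q; auto. unfold Rdiv. rewrite Rmult_assoc, Rinv_l by lra. lra. }
    assert (Hu1 : Y < (r - u) / q).
    { apply Rmult_lt_reg_r with q; auto. unfold Rdiv. rewrite Rmult_assoc, Rinv_l by lra. lra. }
    destruct (HA _ Hv1) as [A1 _]. destruct (HA _ Hu1) as [_ A2].
    destruct (HA v ltac:(lra)) as [A3 _]. destruct (HA (-u) ltac:(lra)) as [_ A4].
    rewrite Ropp_involutive in A4.
    replace (- ((r - u) / q)) with ((u - r) / q) in A2 by (field; lra).
    apply Rabs_def2 in A1; apply Rabs_def2 in A2; apply Rabs_def2 in A3; apply Rabs_def2 in A4.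
    unfold Phi. fold iq.
    replace (c' * (iq * atan ((u - r) / q) - atan u) + c' * (iq * atan ((v - r) / q) - atan v) - 0)
      with (c' * (iq * (atan ((u - r) / q) + atan ((v - r) / q)) - (atan u + atan v))) by ring.
    rewrite Rabs_mult.
    assert (X : Rabs (iq * (atan ((u - r) / q) + atan ((v - r) / q)) - (atan u + atan v)) <= (iq + 1) * (2 * dl)).
    { apply Rabs_le. split; nra. }
    apply Rle_lt_trans with (Rabs c' * ((iq + 1) * (2 * dl))).
    { apply Rmult_le_compat_l; [apply Rabs_pos|exact X]. }
    replace (Rabs c' * ((iq + 1) * (2 * dl))) with (2 * K * dl) by (unfold K; ring).
    unfold dl. apply Rmult_lt_reg_r with (2 * K + 1); [lra|].
    unfold Rdiv. replace (2 * K * (eps * / (2 * K + 1)) * (2 * K + 1)) with (2 * K * eps) by (field; lra).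
    nra.
Qed.

Lemma Zint_0 : is_improper_int_R (fun x => p_C x * J_fun x 3 0 1) (/ PI * Kc 0).
Proof.
  set (cst := / PI * Kc 0).
  set (k := fun x => cst * (x / (1 + x^2)^2)).
  set (Phi := fun x => - cst / (2 * (1 + x^2))).
  assert (Hpos2 : forall x, 0 < 1 + x^2) by (intro x; assert (0 <= x^2) by apply pow2_ge_0; nra).
  assert (EZ : 0 - 2 * Phi 0 = cst) by (unfold Phi; field).
  rewrite <- EZ.
  apply (improper_R_of_antideriv _ k Phi).
  - intro x. unfold Phi, k. auto_derive.
    + specialize (Hpos2 x); lra.
    + specialize (Hpos2 x). field. lra.
  - intro x. apply cont_of_derive. unfold k. auto_derive. specialize (Hpos2 x). simpl in Hpos2. rewrite Rmult_1_r. apply Rmult_integral_contrapositive_currified; lra.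
  - intros x Hx. rewrite fval by lra. rewrite Rabs_right by lra. unfold k, cst.
    specialize (Hpos2 x). field. repeat split; try lra; apply PI_neq0.
  - intros x Hx. rewrite fval by lra. rewrite Rabs_left1 by lra. unfold k, cst.
    specialize (Hpos2 x). field. repeat split; try lra; apply PI_neq0.
  - intros eps He.
    set (K := Rabs cst).
    set (dl := eps / (K + 1)).
    assert (Hdl : 0 < dl) by (apply Rdiv_lt_0_compat; unfold K; assert (0 <= Rabs cst) by apply Rabs_pos; lra).
    assert (Hsm : forall x, / dl < Rabs x -> 0 < / (1 + x^2) < dl).
    { intros x Hx. split. apply Rinv_0_lt_compat; auto.
      assert (Hi : 0 < / dl) by (apply Rinv_0_lt_compat; auto).
      assert (Hx2 : 2 * Rabs x <= 1 + x^2).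
      { rewrite <- (pow2_abs x). assert (0 <= (Rabs x - 1)^2) by apply pow2_ge_0. assert ((Rabs x - 1)^2 = Rabs x^2 - 2 * Rabs x + 1) by ring. lra. }
      apply Rmult_lt_reg_l with (1 + x^2); auto. rewrite Rinv_r by (specialize (Hpos2 x); lra).
      assert (/ dl * dl = 1) by (field; lra). nra. }
    exists (/ dl). intros u v Hu Hv.
    assert (Au : 0 < / (1 + u^2) < dl) by (apply Hsm; rewrite Rabs_left; [lra| assert (0 < /dl) by (apply Rinv_0_lt_compat; auto); lra]).
    assert (Av : 0 < / (1 + v^2) < dl) by (apply Hsm; rewrite Rabs_right; [lra| assert (0 < /dl) by (apply Rinv_0_lt_compat; auto); lra]).
    unfold Phi.
    replace (- cst / (2 * (1 + u ^ 2)) + - cst / (2 * (1 + v ^ 2)) - 0)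
      with (- cst * ((/ (1 + u^2) + / (1 + v^2)) / 2)) by (assert (P1 := Hpos2 u); assert (P2 := Hpos2 v); field; split; lra).
    rewrite Rabs_mult, Rabs_Ropp. fold K.
    rewrite (Rabs_right ((/ (1 + u ^ 2) + / (1 + v ^ 2)) / 2)) by lra.
    apply Rle_lt_trans with (K * dl).
    { apply Rmult_le_compat_l; [apply Rabs_pos| lra]. }
    unfold dl. assert (0 <= K) by apply Rabs_pos.
    apply Rmult_lt_reg_r with (K + 1); [lra|].
    unfold Rdiv. replace (K * (eps * / (K + 1)) * (K + 1)) with (K * eps) by (field; lra). nra.
Qed.


Lemma is_RInt_plus_R (f g : R -> R) a b (If Ig : R) :
  is_RInt f a b If -> is_RInt g a b Ig -> is_RInt (fun y => f y + g y) a b (If + Ig).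
Proof. intros H1 H2. exact (is_RInt_plus f g a b If Ig H1 H2). Qed.

Lemma is_RInt_scal_R (f : R -> R) a b k (If : R) :
  is_RInt f a b If -> is_RInt (fun y => k * f y) a b (k * If).
Proof. intros H1. exact (is_RInt_scal f a b k If H1). Qed.

Lemma is_RInt_unique_R (f : R -> R) a b (l1 l2 : R) : is_RInt f a b l1 -> is_RInt f a b l2 -> l1 = l2.
Proof. intros H1 H2. rewrite <- (is_RInt_unique f a b l1 H1). exact (is_RInt_unique f a b l2 H2). Qed.

Definition beta_n (n : nat) := RInt (fun u => (1 - u^2)^n) 0 1.

Lemma beta_is n : is_RInt (fun u => (1 - u^2)^n) 0 1 (beta_n n).
Proof.
  apply (RInt_correct (fun u => (1 - u^2)^n)). apply ex_RInt_cont_R. intros.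
  apply cont_of_derive. auto_derive. auto.
Qed.

Lemma beta_rec n : (2 * INR n + 3) * beta_n (S n) = (2 * INR n + 2) * beta_n n.
Proof.
  assert (I1 : is_RInt (fun u => (2 * INR n + 3) * (1 - u^2)^(S n) + (- (2 * INR n + 2)) * (1 - u^2)^n) 0 1
                ((2 * INR n + 3) * beta_n (S n) + (- (2 * INR n + 2)) * beta_n n)).
  { apply is_RInt_plus_R; apply is_RInt_scal_R; apply beta_is. }
  assert (I2 : is_RInt (fun u => (2 * INR n + 3) * (1 - u^2)^(S n) + (- (2 * INR n + 2)) * (1 - u^2)^n) 0 1
                ((fun u => u * (1 - u^2)^(S n)) 1 - (fun u => u * (1 - u^2)^(S n)) 0)).
  { apply (is_RInt_derive_R (fun u => u * (1 - u^2)^(S n)) (fun u => (2 * INR n + 3) * (1 - u^2)^(S n) + (- (2 * INR n + 2)) * (1 - u^2)^n)).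
    - intros x _. auto_derive; auto. replace (match n with 0%nat => 1 | S _ => INR n + 1 end) with (INR n + 1) by (destruct n; simpl; ring). change ((1 - x^2)^(S n)) with ((1-x^2) * (1-x^2)^n). replace (1 + - (x * (x * 1))) with (1 - x^2) by ring. ring.
    - intros x _. apply cont_of_derive. auto_derive; auto. }
  assert (E := is_RInt_unique_R _ _ _ _ _ I1 I2). simpl in E.
  replace (1 - 1 * (1 * 1)) with 0 in E by ring. rewrite Rmult_0_l, !Rmult_0_l, Rmult_0_r in E. lra.
Qed.

Fixpoint pochR (a : R) (n : nat) : R := match n with O => 1 | S k => pochR a k * (a + INR k) end.

Lemma poch_pos n : 0 < poch (3/2) n.
Proof. induction n; simpl. lra. assert (0 <= INR n) by apply pos_INR. apply Rmult_lt_0_compat; lra. Qed.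

Lemma poch1 n : poch 1 n = INR (Factorial.fact n).
Proof.
  induction n; simpl poch. simpl; auto. rewrite IHn, fact_simpl, mult_INR, S_INR. ring.
Qed.

Lemma beta_val n : beta_n n = INR (Factorial.fact n) / poch (3/2) n.
Proof.
  induction n.
  - simpl. assert (I := beta_is 0). simpl in I.
    assert (I2 : is_RInt (fun _ : R => 1) 0 1 (1 - 0)).
    { apply (is_RInt_derive_R (fun x => x) (fun _ => 1)). intros; auto_derive; auto. intros; apply cont_of_derive; auto_derive; auto. }
    rewrite (is_RInt_unique_R _ _ _ _ _ I I2). field.
  - assert (R := beta_rec n). assert (P := poch_pos n). assert (0 <= INR n) by apply pos_INR.
    apply Rmult_eq_reg_l with (2 * INR n + 3); [|lra]. rewrite R, IHn.
    simpl poch. rewrite fact_simpl, mult_INR, S_INR. field. lra.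
Qed.

Lemma term_val z n : hyp2F1_term 1 1 (3/2) z n = beta_n n * z^n.
Proof.
  unfold hyp2F1_term. rewrite beta_val, !poch1. assert (P := poch_pos n).
  assert (0 < INR (Factorial.fact n)) by (apply lt_0_INR; apply Factorial.lt_O_fact).
  field. lra.
Qed.

Lemma partial_is z N : is_RInt (fun u => sum_f_R0 (fun i => z^i * (1 - u^2)^i) N) 0 1
                         (sum_f_R0 (fun n => beta_n n * z^n) N).
Proof.
  induction N.
  - simpl. apply is_RInt_ext_R with (fun u => z^0 * (1 - u^2)^0).
    { intros; simpl; ring. }
    replace (beta_n 0 * 1) with (z^0 * beta_n 0) by (simpl; ring).
    apply is_RInt_scal_R, beta_is.
  - simpl. replace (sum_f_R0 (fun n => beta_n n * z ^ n) N + beta_n (S N) * (z * z ^ N))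
      with (sum_f_R0 (fun n => beta_n n * z ^ n) N + (z^(S N) * beta_n (S N))) by (simpl; ring).
    apply (is_RInt_plus_R (fun u => sum_f_R0 (fun i => z^i * (1 - u^2)^i) N) (fun u => z^(S N) * (1 - u^2)^(S N))).
    exact IHN. apply is_RInt_scal_R, beta_is.
Qed.

Lemma series_lim z Iv : 0 <= z < 1 -> is_RInt (fun u => / (1 - z * (1 - u^2))) 0 1 Iv ->
  infinite_sum (hyp2F1_term 1 1 (3/2) z) Iv.
Proof.
  intros Hz HI.
  assert (Sb : forall N, 0 <= Iv - sum_f_R0 (fun n => beta_n n * z^n) N <= z^(S N) / (1 - z)).
  { intro N.
    set (g := fun u => (z * (1 - u^2))^(S N) / (1 - z * (1 - u^2))).
    assert (Hw : forall u, 0 <= u <= 1 -> 0 <= z * (1 - u^2) <= z).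
    { intros u Hu. assert (0 <= u^2 <= 1) by (split; [apply pow2_ge_0| nra]). split; nra. }
    assert (Ig : is_RInt g 0 1 (Iv - sum_f_R0 (fun n => beta_n n * z^n) N)).
    { apply is_RInt_ext_R with (fun u => / (1 - z * (1 - u^2)) + (-1) * sum_f_R0 (fun i => z^i * (1 - u^2)^i) N).
      - intros u Hu. rewrite Rmin_left, Rmax_right in Hu by lra.
        destruct (Hw u ltac:(lra)) as [W1 W2].
        unfold g. rewrite (sum_eq _ (fun i => (z * (1 - u^2))^i)) by (intros; rewrite Rpow_mult_distr; auto).
        rewrite tech3 by lra. field. lra.
      - replace (Iv - sum_f_R0 (fun n => beta_n n * z ^ n) N) with (Iv + (-1) * sum_f_R0 (fun n => beta_n n * z ^ n) N) by ring.
        apply is_RInt_plus_R; auto. apply is_RInt_scal_R, partial_is. }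
    rewrite <- (is_RInt_unique g 0 1 _ Ig).
    assert (Eg : ex_RInt g 0 1) by (eexists; exact Ig).
    split.
    - apply RInt_ge_0; auto; try lra. intros u Hu. destruct (Hw u ltac:(lra)) as [W1 W2].
      unfold g. apply Rmult_le_pos. apply pow_le; auto. left; apply Rinv_0_lt_compat; lra.
    - apply Rle_trans with (RInt (fun _ => z^(S N) / (1 - z)) 0 1).
      + apply RInt_le; auto; try lra. apply ex_RInt_const.
        intros u Hu. destruct (Hw u ltac:(lra)) as [W1 W2]. unfold g.
        apply Rmult_le_compat. apply pow_le; auto. left; apply Rinv_0_lt_compat; lra.
        apply pow_incr; lra.
        apply Rinv_le_contravar; lra.
      + rewrite RInt_const. unfold scal; simpl; unfold mult; simpl. lra. }
  intros eps He.
  assert (Hza : Rabs z < 1) by (rewrite Rabs_right; lra).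
  destruct (pow_lt_1_zero z Hza (eps * (1 - z))) as [N0 HN0]. { apply Rmult_lt_0_compat; lra. }
  exists N0. intros n Hn.
  rewrite (sum_eq _ (fun n => beta_n n * z^n)) by (intros; apply term_val).
  unfold Rdist. specialize (Sb n). rewrite Rabs_minus_sym, Rabs_right by lra.
  assert (A := HN0 (S n) ltac:(lia)). rewrite Rabs_right in A by (apply Rle_ge, pow_le; lra).
  apply Rle_lt_trans with (z ^ S n / (1 - z)); [lra|].
  apply Rmult_lt_reg_r with (1 - z); [lra|]. unfold Rdiv. rewrite Rmult_assoc, Rinv_l by lra. lra.
Qed.


Lemma ser_int_nz r : -1 < r < 1 -> r <> 0 ->
  is_RInt (fun u => / (1 - r^2 * (1 - u^2))) 0 1 (atan (r / sqrt (1 - r^2)) / (r * sqrt (1 - r^2))).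
Proof.
  intros Hr Hr0. set (q := sqrt (1 - r^2)).
  assert (Hq : 0 < q) by (apply sqrt_lt_R0; nra).
  assert (Hq2 : q^2 = 1 - r^2) by (unfold q; apply pow2_sqrt; nra).
  assert (Hp : forall u, 0 < q^2 + r^2 * u^2) by (intro u; assert (0 <= r^2 * u^2) by (apply Rmult_le_pos; apply pow2_ge_0); nra).
  apply is_RInt_ext_R with (fun u => / (q^2 + r^2 * u^2)).
  { intros u _. rewrite Hq2. f_equal. ring. }
  assert (E : atan (r / q) / (r * q) = (fun u => / (r * q) * atan (r * u / q)) 1 - (fun u => / (r * q) * atan (r * u / q)) 0).
  { simpl. replace (r * 0 / q) with 0 by (field; lra). replace (r * 1) with r by ring. rewrite atan_0. field. lra. }
  rewrite E. apply (is_RInt_derive_R (fun u => / (r * q) * atan (r * u / q)) (fun u => / (q^2 + r^2 * u^2))).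
  - intros x _. auto_derive. split; lra. specialize (Hp x). field. replace ((r * x)^2) with (r^2 * x^2) by ring. repeat split; lra.

  - intros x _. apply cont_of_derive. auto_derive. specialize (Hp x); lra.
Qed.

Lemma ser_int_0 : is_RInt (fun u => / (1 - 0^2 * (1 - u^2))) 0 1 1.
Proof.
  apply is_RInt_ext_R with (fun _ => 1). { intros; simpl; field. }
  replace 1 with ((fun x : R => x) 1 - (fun x : R => x) 0) at 2 by (simpl; ring).
  apply (is_RInt_derive_R (fun x => x) (fun _ => 1)).
  intros; auto_derive; auto. intros; apply cont_of_derive; auto_derive; auto.
Qed.

Lemma Kc_pos r : -1 < r < 1 -> 0 < Kc r.
Proof.
  intro Hr. unfold Kc, C0, cT, kF, Beta.
  assert (G1 := Gamma_pos ((3+1)/2) ltac:(split; lra)).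
  assert (G2 := Gamma_pos (3/2) ltac:(split; lra)).
  assert (G3 := Gamma_pos ((3-1)/2) ltac:(split; lra)).
  assert (G4 := Gamma_pos ((3+1)/2 + (3-1)/2) ltac:(split; lra)).
  assert (Hm : 0 < mm r) by (unfold mm; apply Rdiv_lt_0_compat; apply sqrt_lt_R0; nra).
  assert (S : 0 < sqrt (3 * PI)) by (apply sqrt_lt_R0; assert (P := PI_RGT_0); lra).
  apply Rdiv_lt_0_compat; [|apply pow_lt; auto].
  repeat (apply Rmult_lt_0_compat || apply Rdiv_lt_0_compat || apply Rinv_0_lt_compat); auto; lra.
Qed.

Theorem mainTheorem7 (r : R) (hr : -1 < r < 1) :
  exists Z H : R,
    is_improper_int_R (fun x => p_C x * J_fun x 3 r 1) Z /\ Z <> 0 /\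
    infinite_sum (hyp2F1_term 1 1 (3 / 2) (r ^ 2)) H /\
    (r <> 0 -> / H = r * sqrt (1 - r ^ 2) / asin r) /\
    (r = 0 -> / H = 1) /\
    (forall b : R, b <> 0 ->
       p_C b * J_fun b 3 r 1 / Z
       = / H * (1 / (1 + b ^ 2)) * (Rabs b / (b ^ 2 - 2 * r * b + 1))).
Proof.
  assert (HK := Kc_pos r hr).
  assert (HPI : 0 < / PI) by (apply Rinv_0_lt_compat, PI_RGT_0).
  assert (HPI2 := PI_neq0).
  assert (Hz : 0 <= r^2 < 1) by (split; [apply pow2_ge_0|nra]).
  destruct (Req_dec r 0) as [Hr0|Hr0].
  - subst r. exists (/ PI * Kc 0), 1. split; [exact Zint_0|]. split.
    { apply Rgt_not_eq. apply Rmult_lt_0_compat; auto. }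
    split; [apply series_lim; auto; apply ser_int_0|].
    split; [intro; lra|]. split; [intro; field|].
    intros b Hb. rewrite fval by lra.
    assert (0 < 1 + b^2) by (assert (0 <= b^2) by apply pow2_ge_0; lra).
    assert (0 < b ^ 2 - 2 * 0 * b + 1) by (assert (0 <= b^2) by apply pow2_ge_0; lra).
    field. repeat split; lra.
  - set (q := sqrt (1 - r^2)).
    assert (Hq : 0 < q) by (apply sqrt_lt_R0; nra).
    assert (Hat : atan (r / q) <> 0).
    { intro A. assert (T := tan_atan (r / q)). rewrite A, tan_0 in T.
      assert (r = 0) by (apply (Rmult_eq_reg_r (/ q)); [rewrite Rmult_0_l; unfold Rdiv in T; lra | apply Rinv_neq_0_compat; lra]). lra. }
    set (Hv := atan (r / q) / (r * q)).
    assert (HHv : Hv <> 0) by (unfold Hv; unfold Rdiv; repeat apply Rmult_integral_contrapositive_currified; auto; apply Rinv_neq_0_compat; apply Rmult_integral_contrapositive_currified; lra).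
    exists (/ PI * Kc r * Hv), Hv. split; [apply Zint_nz; auto|]. split.
    { apply Rmult_integral_contrapositive_currified; [apply Rmult_integral_contrapositive_currified; lra | exact HHv]. }
    split; [apply series_lim; auto; apply ser_int_nz; auto|].
    split.
    { intros _. unfold asin. destruct (Rle_dec r (-1)); [lra|]. destruct (Rle_dec 1 r); [lra|].
      replace (r²) with (r^2) by (unfold Rsqr; ring). fold q. unfold Hv. field. split; lra. }
    split; [intro; lra|].
    intros b Hb. rewrite fval by lra.
    assert (0 < 1 + b^2) by (assert (0 <= b^2) by apply pow2_ge_0; lra).
    assert (0 < b ^ 2 - 2 * r * b + 1) by (assert (0 <= (b - r)^2) by apply pow2_ge_0; nra).
    field. repeat split; lra.
Qed.
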